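(* For $n\geq5$, \[\frac{n+2}{n}\leq \frac{\ell_{n-1}(n)}{\ell_{n-2}(n)}\leq \frac{4n+7}{4n-2}.\]
   Context: For $0\leq i\leq 2n$, $\ell_i(n)$ denotes the number of vectors in $\{0,1,2\}^n$ whose coordinates sum to $i$. *)

(* Defs.v *)
From HB Require Import structures.
From mathcomp Require Import all_boot all_order all_algebra.
Set Implicit Arguments. Unset Strict Implicit. Unset Printing Implicit Defensive.

Definition ell (i n : nat) : nat :=
  #|[set f : {ffun 'I_n -> 'I_3} | (\sum_(j < n) (f j : nat))%N == i]|.

(* Main.v *)
Require Import Defs.
From HB Require Import structures.
From mathcomp Require Import all_boot all_order all_algebra ring lra.
Import Order.TTheory GRing.Theory Num.Theory.
Local Open Scope ring_scope.
Definition P : {poly rat} := 1 + 'X + 'X^2.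
Definition c n m := (P ^+ n)`_m.

Lemma P_sum : P = \sum_(k < 3) 'X^k.
Proof. by rewrite !big_ord_recr big_ord0 /= add0r expr0 expr1 /P. Qed.

Lemma ell_coef i n : (ell i n)%:R = c n i.
Proof.
rewrite /c; have -> : P ^+ n = \prod_(j < n) P by rewrite prodr_const card_ord.
rewrite P_sum bigA_distr_bigA /= coef_sum.
rewrite /ell cardsE -sum1_card natr_sum big_mkcond /=.
apply: eq_bigr => f _.
rewrite prodrXr coefXn eq_sym; rewrite unfold_in /=.
set b := (eqn _ _); have -> : b = ((\sum_(j < n) f j)%N == i) by []; by case: (_ == _).
Qed.

Lemma coefMP (q : {poly rat}) m : (q * P)`_m.+2 = q`_m.+2 + q`_m.+1 + q`_m.
Proof. by rewrite /P !mulrDr mulr1 !coefD coefMX coefMXn /= subn2. Qed.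

Lemma cS n m : c n.+1 m.+2 = c n m.+2 + c n m.+1 + c n m.
Proof. by rewrite /c exprSr coefMP. Qed.

Lemma dP : P^`() = 1 + 'X *+ 2.
Proof. by rewrite /P !derivE /= add0r expr1. Qed.

Lemma cD n m : (m.+3)%:R * c n.+1 m.+3 + (m.+2)%:R * c n.+1 m.+2 + (m.+1)%:R * c n.+1 m.+1
  = (n.+1)%:R * (c n.+1 m.+2 + 2 * c n.+1 m.+1).
Proof.
have H : (P ^+ n.+1)^`() * P = (P ^+ n.+1 + (P ^+ n.+1 * 'X) *+ 2) *+ n.+1.
  rewrite deriv_exp dP /= exprSr; ring.
have := congr1 (fun p : {poly rat} => p`_m.+2) H.
rewrite coefMP !coef_deriv coefMn coefD coefMn coefMX /= /c => E.
by rewrite !mulr_natl E.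
Qed.

Lemma c0 n : c n.+1 0 = c n 0.
Proof. by rewrite /c exprSr /P !mulrDr mulr1 !coefD coefMX coefMXn /= addr0 addr0. Qed.
Lemma c1 n : c n.+1 1 = c n 1 + c n 0.
Proof. by rewrite /c exprSr /P !mulrDr mulr1 !coefD coefMX coefMXn /= addr0. Qed.
Lemma cz m : c 0 m = (m == 0)%:R.
Proof. by rewrite /c expr0 coef1. Qed.

Lemma base : c 5 5 = 51 /\ c 5 4 = 45.
Proof. rewrite !(cS, c1, c0, cz) /=. split; lra. Qed.
Lemma step1 (N a b : rat) : 5 <= N -> 0 < b -> (4*N^+2+10*N+3)*b <= (4*N^+2+7*N)*a ->
  (4*N+9)*b <= (4*N+6)*a.
Proof.
move=> N5 b0 H1.
have h2 : 0 < 4*N^+2+7*N by nra.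
have h3 : (4*N+9)*(4*N^+2+7*N)*b <= (4*N+6)*(4*N^+2+7*N)*a by nra.
nra.
Qed.
Lemma step2 (N a b : rat) : 5 <= N -> 0 < b -> 4*N*a <= (4*N+3)*b ->
  (4*(N+1)^+2+10*(N+1)+3)*(N+1)*(2*a+b) <= (4*(N+1)^+2+7*(N+1))*(N+2)*(a+2*b).
Proof.
move=> N5 b0 H1.
set M := N + 1.
have hM : 6 <= M by rewrite /M; lra.
set al := 4*M^+3+9*M^+2-M.
set be := 4*M^+3+12*M^+2+11*M.
have hal : 0 <= al by rewrite /al; nra.
have e1 : al*(4*N*a) <= al*((4*N+3)*b) by apply: ler_wpM2l.
have e2 : al*(4*N+3) <= be*(4*N).
  have -> : N = M - 1 by rewrite /M; ring.
  rewrite /al /be; nra.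
have e3 : al*(4*N+3)*b <= be*(4*N)*b by apply: ler_wpM2r => //; lra.
have e4 : al * a <= be * b by nra.
have -> : N + 2 = M + 1 by rewrite /M; ring.
have : (4*M^+2+10*M+3)*M*(2*a+b) - (4*M^+2+7*M)*(M+1)*(a+2*b) = al * a - be * b by rewrite /al /be; ring.
lra.
Qed.

Lemma natS5 k : (k.+4.+1)%:R = k%:R + 5 :> rat.
Proof. by rewrite -!natr1; ring. Qed.

Lemma relC k : let N := k%:R + 5 : rat in
  N * c k.+4.+1 k.+4.+1 = c k.+4.+1 k.+4 + (N+2) * c k.+4.+1 k.+3.
Proof.
move=> N; have := cD k.+4 k.+2.
rewrite /N -!natr1; lra.
Qed.

Lemma relD k : c k.+4.+1 k.+4.+2 = c k.+4.+1 k.+4.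
Proof.
have := cD k.+4 k.+3.
have h0 : (0 : rat) <= k%:R by [].
rewrite -!natr1 => E.
have : (k%:R + 1 + 1 + 1 + 1 + 1 + 1) * (c k.+4.+1 k.+4.+2 - c k.+4.+1 k.+4) = 0 by lra.
move/eqP; rewrite mulf_eq0 => /orP [/eqP|/eqP]; first by lra.
by move=> /eqP; rewrite subr_eq0 => /eqP.
Qed.

Lemma inv k : let N := k%:R + 5 : rat in
  0 < c k.+4.+1 k.+4 /\
  (4*N^+2+10*N+3)*c k.+4.+1 k.+4 <= (4*N^+2+7*N)*c k.+4.+1 k.+4.+1 /\
  4*N*c k.+4.+1 k.+4.+1 <= (4*N+3)*c k.+4.+1 k.+4.
Proof.
elim: k => [|k IH] /=.
  have [-> ->] := base.
  rewrite add0r; lra.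
case: IH => b0 [H1 H2].
have eC := relC k; have eD := relD k.
set N := k%:R + 5 in eC b0 H1 H2 *.
have -> : k.+1%:R + 5 = N + 1 by rewrite /N -natr1; ring.
have -> : c k.+4.+2 k.+4.+2 = c k.+4.+1 k.+4.+2 + c k.+4.+1 k.+4.+1 + c k.+4.+1 k.+4 by rewrite cS.
have -> : c k.+4.+2 k.+4.+1 = c k.+4.+1 k.+4.+1 + c k.+4.+1 k.+4 + c k.+4.+1 k.+3 by rewrite cS.
rewrite eD.
move: eC b0 H1 H2.
set a := c k.+4.+1 k.+4.+1; set b := c k.+4.+1 k.+4; set cc := c k.+4.+1 k.+3.
move=> /= eC b0 H1 H2.
have N5 : 5 <= N by rewrite /N; have : (0:rat) <= k%:R by []; lra.
have s1 := @step1 N a b N5 b0 H1.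
have s2 := @step2 N a b N5 b0 H2.
have hb' : (N+2)*(a+b+cc) = (2*N+2)*a + (N+1)*b by nra.
have ab : b <= a by nra.
have cpos : 0 < cc by nra.
split; first by lra.
split.
  nra.
nra.
Qed.

Theorem mainTheorem16 (n : nat) (hn : (5 <= n)%N) :
  (n%:R + 2) / n%:R <= (ell n.-1 n)%:R / (ell n.-2 n)%:R :> rat /\
  (ell n.-1 n)%:R / (ell n.-2 n)%:R <= (4 * n%:R + 7) / (4 * n%:R - 2) :> rat.
Proof.
have [k ->] : exists k, n = k.+4.+1.
  by move: hn; do 5 case: n => [|n] //; move=> _; exists n.
rewrite /= !ell_coef.
have [b0 [H1 H2]] := inv k.
have eC := relC k.
move: eC b0 H1 H2 => /=.
rewrite natS5.
set N := k%:R + 5; set a := c _ _; set b := c _ k.+4; set cc := c _ k.+3.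
move=> eC b0 H1 H2.
have N5 : 5 <= N by rewrite /N; have : (0:rat) <= k%:R by []; lra.
have cpos : 0 < cc by nra.
have Np : 0 < N by lra.
have Dp : 0 < 4 * N - 2 by lra.
rewrite natS5 -/N.
split.
  rewrite ler_pdivrMr // mulrAC ler_pdivlMr //; nra.
rewrite ler_pdivlMr // mulrAC ler_pdivrMr //; nra.
Qed.
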